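(* Let $\mathbb A$ be an abelian category with enough projective objects. A morphism $(f_0,f_1):a\to b$ in $\mathbb A^{[1]}_c$, where $a:A_1\to A_0$ and $b:B_1\to B_0$, is faithful in $\mathbb A^{[1]}_c$ if and only if the morphism $\begin{pmatrix}-a\\ f_1\end{pmatrix}:A_1\to A_0\oplus B_1$ is a monomorphism in $\mathbb A$.
   Context: Let $\mathbb A$ be an abelian category. The 2-category $\mathbb A^{[1]}$ has as objects the morphisms $a:A_1\to A_0$ of $\mathbb A$. For objects $a:A_1\to A_0$ and $b:B_1\to B_0$, a morphism $a\to b$ is a pair $(f_0,f_1)$ of morphisms $f_i:A_i\to B_i$ of $\mathbb A$ with $b f_1=f_0 a$; composition is componentwise. A 2-arrow $(f_0,f_1)\Rightarrow(g_0,g_1)$ between morphisms $a\to b$ is a morphism $\alpha:A_0\to B_1$ of $\mathbb A$ with $f_1-g_1=\alpha a$ and $f_0-g_0=b\alpha$; vertical composition is addition of such $\alpha$'s, and whiskering is given by $(h_0,h_1)\circ\alpha=h_1\alpha$ and $\alpha\circ(e_0,e_1)=\alpha e_0$. All 2-arrows are invertible, so each $\mathbf{Hom}(a,b)$ is a groupoid. $\mathbb A^{[1]}_c$ is the full 2-subcategory of $\mathbb A^{[1]}$ on the objects $a:A_1\to A_0$ with $A_0$ projective in $\mathbb A$. A morphism $f:a\to b$ of $\mathbb A^{[1]}_c$ is faithful in $\mathbb A^{[1]}_c$ if for every object $x$ of $\mathbb A^{[1]}_c$ the functor $f\circ-:\mathbf{Hom}(x,a)\to\mathbf{Hom}(x,b)$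 is faithful. *)

(* Defs.v *)
From HB Require Import structures.
From mathcomp Require Import all_boot all_order all_algebra.
Set Implicit Arguments. Unset Strict Implicit. Unset Printing Implicit Defensive.
Import GRing.Theory.
Local Open Scope ring_scope.

Record PreAdd := {
  ObC : Type;
  HomC : ObC -> ObC -> zmodType;
  cmp : forall A B C : ObC, HomC B C -> HomC A B -> HomC A C;
  idm : forall A : ObC, HomC A A;
  comp_assoc : forall A B C D (h : HomC C D) (g : HomC B C) (f : HomC A B),
      cmp h (cmp g f) = cmp (cmp h g) f;
  comp_idl : forall A B (f : HomC A B), cmp (idm B) f = f;
  comp_idr : forall A B (f : HomC A B), cmp f (idm A) = f;
  comp_addl : forall A B C (g g' : HomC B C) (f : HomC A B),
      cmp (g + g') f = cmp g f + cmp g' f;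
  comp_addr : forall A B C (g : HomC B C) (f f' : HomC A B),
      cmp g (f + f') = cmp g f + cmp g f'
}.

Arguments cmp {p A B C}.
Arguments idm {p}.

Notation "g \o' f" := (cmp g f) (at level 40, left associativity).

Section Cat.
Variable C : PreAdd.

Definition mono {A B : ObC C} (f : HomC A B) : Prop :=
  forall (X : ObC C) (g h : HomC X A), f \o' g = f \o' h -> g = h.

Definition epi {A B : ObC C} (f : HomC A B) : Prop :=
  forall (X : ObC C) (g h : HomC B X), g \o' f = h \o' f -> g = h.

Definition is_zero_obj (Z : ObC C) : Prop :=
  forall X : ObC C, (forall f g : HomC X Z, f = g) /\ (forall f g : HomC Z X, f = g).

Definition is_biproduct {A B S : ObC C} (i1 : HomC A S) (i2 : HomC B S)
    (p1 : HomC S A) (p2 : HomC S B) : Prop :=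
  [/\ p1 \o' i1 = idm A, p2 \o' i2 = idm B, p1 \o' i2 = 0, p2 \o' i1 = 0
    & i1 \o' p1 + i2 \o' p2 = idm S].

Definition is_kernel {K A B : ObC C} (f : HomC A B) (k : HomC K A) : Prop :=
  f \o' k = 0 /\
  forall (X : ObC C) (g : HomC X A), f \o' g = 0 ->
    exists h : HomC X K, k \o' h = g /\ forall h' : HomC X K, k \o' h' = g -> h' = h.

Definition is_cokernel {A B Q : ObC C} (f : HomC A B) (q : HomC B Q) : Prop :=
  q \o' f = 0 /\
  forall (X : ObC C) (g : HomC B X), g \o' f = 0 ->
    exists h : HomC Q X, h \o' q = g /\ forall h' : HomC Q X, h' \o' q = g -> h' = h.

Definition is_abelian : Prop :=
  (exists Z : ObC C, is_zero_obj Z) /\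
      (forall A B : ObC C, exists (S : ObC C) (i1 : HomC A S) (i2 : HomC B S)
          (p1 : HomC S A) (p2 : HomC S B), is_biproduct i1 i2 p1 p2) /\
      (forall (A B : ObC C) (f : HomC A B), exists (K : ObC C) (k : HomC K A), is_kernel f k) /\
      (forall (A B : ObC C) (f : HomC A B), exists (Q : ObC C) (q : HomC B Q), is_cokernel f q) /\
      (forall (A B : ObC C) (f : HomC A B), mono f ->
          exists (D : ObC C) (g : HomC B D), is_kernel g f) /\
      (forall (A B : ObC C) (f : HomC A B), epi f ->
          exists (D : ObC C) (g : HomC D A), is_cokernel g f).

Definition projective (P : ObC C) : Prop :=
  forall (B D : ObC C) (e : HomC B D), epi e ->
    forall g : HomC P D, exists h : HomC P B, e \o' h = g.

Definition enough_projectives : Prop :=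
  forall A : ObC C, exists (P : ObC C) (p : HomC P A), projective P /\ epi p.

(* The 2-category A^[1]: an object is a morphism a : A1 -> A0 of C.
   (g0, g1) : x -> a is a morphism iff a g1 = g0 x. *)
Definition arr_mor {X1 X0 A1 A0 : ObC C} (x : HomC X1 X0) (a : HomC A1 A0)
    (g0 : HomC X0 A0) (g1 : HomC X1 A1) : Prop :=
  a \o' g1 = g0 \o' x.

Definition two_arrow {X1 X0 A1 A0 : ObC C} (x : HomC X1 X0) (a : HomC A1 A0)
    (g0 h0 : HomC X0 A0) (g1 h1 : HomC X1 A1) (alpha : HomC X0 A1) : Prop :=
  g1 - h1 = alpha \o' x /\ g0 - h0 = a \o' alpha.

(* f = (f0,f1) : a -> b is faithful in A^[1]_c: for every object x : X1 -> X0
   with X0 projective, the functor f o - : HomC(x,a) -> HomC(x,b)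
   (on 2-arrows: alpha |-> f1 alpha) is faithful. *)
Definition faithful_c {A1 A0 B1 B0 : ObC C} (a : HomC A1 A0) (b : HomC B1 B0)
    (f0 : HomC A0 B0) (f1 : HomC A1 B1) : Prop :=
  forall (X1 X0 : ObC C) (x : HomC X1 X0), projective X0 ->
  forall (g0 h0 : HomC X0 A0) (g1 h1 : HomC X1 A1),
    arr_mor x a g0 g1 -> arr_mor x a h0 h1 ->
  forall alpha beta : HomC X0 A1,
    two_arrow x a g0 h0 g1 h1 alpha -> two_arrow x a g0 h0 g1 h1 beta ->
    f1 \o' alpha = f1 \o' beta -> alpha = beta.

End Cat.

(* Main.v *)
Require Import Defs.
From HB Require Import structures.
From mathcomp Require Import all_boot all_order all_algebra.
Import GRing.Theory.
Local Open Scope ring_scope.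

Section H.
Variable C : PreAdd.

Lemma cmp0r (A B D : ObC C) (g : HomC B D) : g \o' (0 : HomC A B) = 0.
Proof.
have := comp_addr g (0 : HomC A B) 0; rewrite addr0 => /eqP.
by rewrite -subr_eq subrr eq_sym => /eqP.
Qed.

Lemma cmp0l (A B D : ObC C) (f : HomC A B) : (0 : HomC B D) \o' f = 0.
Proof.
have := comp_addl (0 : HomC B D) 0 f; rewrite addr0 => /eqP.
by rewrite -subr_eq subrr eq_sym => /eqP.
Qed.

Lemma cmpNr (A B D : ObC C) (g : HomC B D) (f : HomC A B) : g \o' (- f) = - (g \o' f).
Proof.
apply/eqP; rewrite -addr_eq0 -comp_addr addNr; exact/eqP/cmp0r.
Qed.

Lemma cmpNl (A B D : ObC C) (g : HomC B D) (f : HomC A B) : (- g) \o' f = - (g \o' f).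
Proof.
apply/eqP; rewrite -addr_eq0 -comp_addl addNr; exact/eqP/cmp0l.
Qed.

Lemma cmpBr (A B D : ObC C) (g : HomC B D) (f f' : HomC A B) :
  g \o' (f - f') = g \o' f - g \o' f'.
Proof. by rewrite comp_addr cmpNr. Qed.
End H.

Theorem lemma3p2 (C : PreAdd) (HabC : is_abelian C) (Hproj : enough_projectives C)
    (A1 A0 B1 B0 : ObC C) (a : HomC A1 A0) (b : HomC B1 B0)
    (hA0 : projective A0) (hB0 : projective B0)
    (f0 : HomC A0 B0) (f1 : HomC A1 B1) (hf : arr_mor a b f0 f1)
    (S : ObC C) (i1 : HomC A0 S) (i2 : HomC B1 S) (p1 : HomC S A0) (p2 : HomC S B1)
    (hS : is_biproduct i1 i2 p1 p2) :
  faithful_c a b f0 f1 <-> mono (i1 \o' (- a) + i2 \o' f1).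
Proof.
case: hS => h11 h22 h12 h21 hsum.
set m := i1 \o' (- a) + i2 \o' f1.
have pm1 : p1 \o' m = - a.
  by rewrite /m comp_addr !comp_assoc h11 h12 comp_idl cmp0l addr0.
have pm2 : p2 \o' m = f1.
  by rewrite /m comp_addr !comp_assoc h22 h21 comp_idl cmp0l add0r.
have key : forall X (d : HomC X A1), m \o' d = 0 -> a \o' d = 0 /\ f1 \o' d = 0.
  move=> X d hd; split.
    have e : p1 \o' (m \o' d) = p1 \o' 0 by rewrite hd.
    move: e; rewrite cmp0r comp_assoc pm1 cmpNl => /eqP.
    by rewrite oppr_eq0 => /eqP.
  have e : p2 \o' (m \o' d) = p2 \o' 0 by rewrite hd.
  by move: e; rewrite cmp0r comp_assoc pm2.
have key2 : forall X (d : HomC X A1), a \o' d = 0 -> f1 \o' d = 0 -> m \o' d = 0.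
  move=> X d h1 h2.
  by rewrite /m comp_addl -!comp_assoc cmpNl h1 h2 oppr0 !cmp0r addr0.
split.
- move=> hF X g h hgh.
  have hd : m \o' (g - h) = 0 by rewrite cmpBr hgh subrr.
  have [P [p [hP hp]]] := Hproj X.
  have [ha hf1] := key _ _ hd.
  have e : (g - h) \o' p = 0 \o' p.
    rewrite cmp0l.
    apply: (hF P P 0 hP 0 0 0 0 _ _ ((g - h) \o' p) 0).
    - by rewrite /arr_mor !cmp0r.
    - by rewrite /arr_mor !cmp0r.
    - by split; rewrite ?cmp0r subrr // comp_assoc ha cmp0l.
    - by split; rewrite ?cmp0r ?cmp0l subrr.
    - by rewrite comp_assoc hf1 !cmp0l cmp0r.
  by apply/eqP; rewrite -subr_eq0; apply/eqP; exact: hp e.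
- move=> hM X1 X0 x _ g0 h0 g1 h1 _ _ al be [_ ha] [_ hb] hfe.
  apply: (hM X0); apply/eqP; rewrite -subr_eq0 -cmpBr; apply/eqP.
  apply: key2; first by rewrite cmpBr -ha -hb subrr.
  by rewrite cmpBr hfe subrr.
Qed.
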